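(* Let $\{x_k\}$ be an infinite sequence generated by Algorithm SInexPD (the Subgradient-InexP method with the dynamic stepsize rule), under the standing assumptions. Then $\inf_{k\ge0}f(x_k)=f^*$, where $f^*=\inf_{x\in C}f(x)$ (possibly $-\infty$).
   Context: Problem: minimize a convex $f:\mathbb{R}^n\to\mathbb{R}$ over a nonempty closed convex $C\subset\mathbb{R}^n$; $f^*:=\inf_{x\in C}f(x)$. For $\epsilon\ge0$, $\partial_\epsilon f(x):=\{s: f(y)\ge f(x)+\langle s,y-x\rangle-\epsilon\ \forall y\}$; $\partial f=\partial_0f$. Relative error tolerance function: any $\varphi_{\gamma,\theta,\lambda}:(\mathbb{R}^n)^3\to[0,\infty)$ with $\varphi_{\gamma,\theta,\lambda}(u,v,w)\le\gamma\|v-u\|^2+\theta\|w-v\|^2+\lambda\|w-u\|^2$; for $u\in C$, $\mathcal{P}_C(\varphi_{\gamma,\theta,\lambda},u,v):=\{w\in C:\langle v-w,z-w\rangle\le\varphi_{\gamma,\theta,\lambda}(u,v,w)\ \forall z\in C\}$. Standing assumptions: nonnegative sequences $\gamma_k\in[0,\bar\gamma)$, $\theta_k\in[0,\bar\theta)$, $\lambda_k\in[0,\bar\lambda)$ with $\bar\gamma\ge0$, $\bar\theta,\bar\lambda\in[0,1/2)$; $\nu:=\frac{1+2\bar\gamma}{1-2\bar\lambda}$; fixed $\mu\ge0$ and $0<\underline\beta\le\bar\beta<\frac{2}{2\mu+\nu}$. Algorithm SInexPD. Step 0: choose $x_0\in C$, $\delta_0>0$, $R>0$; set $k=0$, $\sigma_0=0$,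 $f^{rec}_{-1}=+\infty$, $\ell=0$, $k(0)=0$. Step 1: if $f(x_k)<f^{rec}_{k-1}$ set $f^{rec}_k=f(x_k)$, $x^{rec}_k=x_k$; else $f^{rec}_k=f^{rec}_{k-1}$, $x^{rec}_k=x^{rec}_{k-1}$. Step 2: if $0\in\partial f(x_k)$ stop. Step 3: if $f(x_k)\le f^{rec}_{k(\ell)}-\tfrac12\delta_\ell$, set $k(\ell+1)=k$, $\sigma_k=0$, $\delta_{\ell+1}=\delta_\ell$, $\ell\leftarrow\ell+1$ and go to Step 5. Step 4: if $\sigma_k>R$, set $k(\ell+1)=k$, $\sigma_k=0$, $\delta_{\ell+1}=\tfrac12\delta_\ell$, $x_k=x^{rec}_k$, $\ell\leftarrow\ell+1$. Step 5: set $f^{lev}_k:=f^{rec}_{k(\ell)}-\delta_\ell$; select $\beta_k\in[\underline\beta,\bar\beta]$ and $\epsilon_k$ with $\{\epsilon_k\}$ nonincreasing and $0<\epsilon_k\le\mu\beta_k[f(x_k)-f^{lev}_k]$; choose nonzero $s_k\in\partial_{\epsilon_k}f(x_k)$, set $\tilde t_k:=\beta_k\frac{f(x_k)-f^{lev}_k}{\|s_k\|}$, $t_k:=\tilde t_k/\|s_k\|$, and take any $x_{k+1}\in\mathcal{P}_C(\varphi_{\gamma_k,\theta_k,\lambda_k},x_k,x_k-t_ks_k)$. Step 6: set $\sigma_{k+1}:=\sigma_k+\tilde t_k$, $k\leftarrow k+1$, go to Step 1. *)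

(* Defs.v *)
From HB Require Import structures.
From mathcomp Require Import all_boot all_order all_algebra.
From mathcomp Require Import all_classical all_reals all_analysis.
Set Implicit Arguments. Unset Strict Implicit. Unset Printing Implicit Defensive.
Import Order.TTheory GRing.Theory Num.Theory.
Local Open Scope classical_set_scope.
Local Open Scope ring_scope.

Section SInexPD_defs.
Context (R : realType) (n : nat).
Local Notation vec := 'rV[R]_n.

Definition dotp (u v : vec) : R := \sum_(i < n) u ord0 i * v ord0 i.
Definition enorm (u : vec) : R := Num.sqrt (dotp u u).

Definition esubdiff (f : vec -> R) (e : R) (x : vec) : set vec :=
  [set s | forall y, f x + dotp s (y - x) - e <= f y].
Definition subdiff (f : vec -> R) (x : vec) : set vec := esubdiff f 0 x.

Definition rel_err_tol (g th la : R) (phi : vec -> vec -> vec -> R) : Prop :=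
  forall u v w, 0 <= phi u v w /\
    phi u v w <= g * enorm (v - u) ^+ 2 + th * enorm (w - v) ^+ 2
                 + la * enorm (w - u) ^+ 2.

Definition inexact_proj (C : set vec) (phi : vec -> vec -> vec -> R)
  (u v : vec) : set vec :=
  [set w | C w /\ forall z, C z -> dotp (v - w) (z - w) <= phi u v w].

(* An infinite run of Algorithm SInexPD.
   x k      : x_k on entry to Step 1 of iteration k
   xh k     : x_k as used in Step 5 (= x^rec_k if Step 4 reset it, else x k)
   frec k, xrec k : f^rec_k, x^rec_k
   ell k    : value of ell used in Step 5 of iteration k
              (value on entry to iteration k is ell (k-1), and 0 for k = 0)
   kl l     : k(l);  delta l : delta_l
   sig k    : sigma_k on entry to iteration k (before a possible reset)
   beta, eps, s, phi : choices of Step 5. *)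
Definition SInexPD_run (f : vec -> R) (C : set vec) (Rb delta0 mu blo bhi : R)
  (gamma theta lambda : nat -> R) (phi : nat -> vec -> vec -> vec -> R)
  (x xh : nat -> vec) (frec : nat -> R) (xrec : nat -> vec)
  (ell kl : nat -> nat) (delta sig beta eps : nat -> R) (s : nat -> vec)
  : Prop :=
  let ell_in k := if k is k'.+1 then ell k' else 0%N in
  let flev k := frec (kl (ell k)) - delta (ell k) in
  let tt k := beta k * (f (xh k) - flev k) / enorm (s k) in
  let t k := tt k / enorm (s k) in
  [/\ (* Step 0 *)
      [/\ C (x 0%N), 0 < delta0, 0 < Rb, delta 0%N = delta0
        & kl 0%N = 0%N /\ sig 0%N = 0],
      (* Step 1 *)
      [/\ frec 0%N = f (x 0%N) /\ xrec 0%N = x 0%N,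
        (forall k, f (x k.+1) < frec k ->
          frec k.+1 = f (x k.+1) /\ xrec k.+1 = x k.+1)
      & (forall k, ~ (f (x k.+1) < frec k) ->
          frec k.+1 = frec k /\ xrec k.+1 = xrec k)],
      (* Step 2: the algorithm never stops *)
      (forall k, ~ subdiff f (x k) 0),
      (* Steps 3, 4 and 6 *)
      (forall k, let l := ell_in k in
        [/\ f (x k) <= frec (kl l) - delta l / 2 ->
              [/\ ell k = l.+1, kl l.+1 = k, delta l.+1 = delta l,
                  xh k = x k & sig k.+1 = tt k],
            ~ (f (x k) <= frec (kl l) - delta l / 2) -> Rb < sig k ->
              [/\ ell k = l.+1, kl l.+1 = k, delta l.+1 = delta l / 2,
                  xh k = xrec k & sig k.+1 = tt k]
          & ~ (f (x k) <= frec (kl l) - delta l / 2) -> ~ (Rb < sig k) ->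
              [/\ ell k = l, xh k = x k & sig k.+1 = sig k + tt k]])
    & (* Step 5 *)
      (forall k,
        [/\ blo <= beta k <= bhi, eps k.+1 <= eps k,
            0 < eps k <= mu * beta k * (f (xh k) - flev k),
            s k != 0 /\ esubdiff f (eps k) (xh k) (s k)
          & rel_err_tol (gamma k) (theta k) (lambda k) (phi k) /\
            inexact_proj C (phi k) (xh k) (xh k - t k *: s k) (x k.+1)])].

End SInexPD_defs.

(* Main.v *)
Require Import Defs.
From HB Require Import structures.
From mathcomp Require Import all_boot all_order all_algebra.
From mathcomp Require Import all_classical all_reals all_analysis.
From mathcomp Require Import ring lra.
Import Order.TTheory GRing.Theory Num.Theory.
Local Open Scope classical_set_scope.
Local Open Scope ring_scope.
Section Vec.
Context (R : realType) (n : nat).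
Local Notation vec := 'rV[R]_n.
Local Notation N2 u := (dotp u u).

Lemma dotpC (u v : vec) : dotp u v = dotp v u.
Proof. by apply: eq_bigr => i _; rewrite mulrC. Qed.

Lemma dotpDl (u v w : vec) : dotp (u + v) w = dotp u w + dotp v w.
Proof. by rewrite /dotp -big_split; apply: eq_bigr => i _; rewrite mxE mulrDl. Qed.

Lemma dotpZl (a : R) (u w : vec) : dotp (a *: u) w = a * dotp u w.
Proof. by rewrite /dotp mulr_sumr; apply: eq_bigr => i _; rewrite mxE mulrA. Qed.

Lemma dotpNl (u w : vec) : dotp (- u) w = - dotp u w.
Proof. by rewrite -scaleN1r dotpZl mulN1r. Qed.

Lemma dotpBl (u v w : vec) : dotp (u - v) w = dotp u w - dotp v w.
Proof. by rewrite dotpDl dotpNl. Qed.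

Lemma dotpDr (u v w : vec) : dotp w (u + v) = dotp w u + dotp w v.
Proof. by rewrite dotpC dotpDl !(dotpC w). Qed.
Lemma dotpBr (u v w : vec) : dotp w (u - v) = dotp w u - dotp w v.
Proof. by rewrite dotpC dotpBl !(dotpC w). Qed.
Lemma dotpZr (a : R) (u w : vec) : dotp w (a *: u) = a * dotp w u.
Proof. by rewrite dotpC dotpZl dotpC. Qed.

Lemma dotpNr (u w : vec) : dotp w (- u) = - dotp w u.
Proof. by rewrite dotpC dotpNl dotpC. Qed.

Lemma N2_ge0 (u : vec) : 0 <= N2 u.
Proof. by apply: sumr_ge0 => i _; rewrite -expr2 sqr_ge0. Qed.

Lemma coord_le (u : vec) (i : 'I_n) : u ord0 i ^+ 2 <= N2 u.
Proof.
rewrite /dotp (bigD1 i) //= -expr2 lerDl.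
by apply: sumr_ge0 => j _; rewrite -expr2 sqr_ge0.
Qed.

Lemma N2_eq0 (u : vec) : N2 u = 0 -> u = 0.
Proof.
move=> h; apply/rowP => i; rewrite mxE.
have := coord_le u i; rewrite h => h2.
by apply/eqP; rewrite -sqrf_eq0 eq_le h2 sqr_ge0.
Qed.

Lemma enorm_sq (u : vec) : enorm u ^+ 2 = N2 u.
Proof. by rewrite /enorm sqr_sqrtr // N2_ge0. Qed.

Lemma enorm_ge0 (u : vec) : 0 <= enorm u.
Proof. exact: sqrtr_ge0. Qed.

Lemma enorm_gt0 (u : vec) : u != 0 -> 0 < enorm u.
Proof.
move=> h; rewrite lt_neqAle enorm_ge0 andbT; apply/eqP => e0.
move/eqP: h; apply; apply: N2_eq0; by rewrite -enorm_sq -e0 expr0n.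
Qed.

Lemma N2B (u v : vec) : N2 (u - v) = N2 u + N2 v - 2 * dotp u v.
Proof. rewrite dotpBl !dotpBr (dotpC v u); lra. Qed.

Lemma N2D (u v : vec) : N2 (u + v) = N2 u + N2 v + 2 * dotp u v.
Proof. rewrite dotpDl !dotpDr (dotpC v u); lra. Qed.

Lemma coord_abs (u : vec) (i : 'I_n) (M : R) : N2 u <= M -> `|u ord0 i| <= M + 1.
Proof.
move=> h; have := coord_le u i; rewrite -real_normK ?num_real // => h2.
have [h1|h1] := leP `|u ord0 i| 1.
  have : 0 <= M by apply: le_trans (N2_ge0 u) h. lra.
have : `|u ord0 i| <= `|u ord0 i| ^+ 2 by rewrite expr2 ler_peMl // ltW.
lra.
Qed.

Lemma coord_abs2 (u : vec) (i : 'I_n) (e : R) : 0 <= e -> N2 u <= e ^+ 2 -> `|u ord0 i| <= e.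
Proof.
move=> e0 h; have := coord_le u i; rewrite -real_normK ?num_real // => h2.
have h3 : `|u ord0 i| ^+ 2 <= e ^+ 2 by lra.
by rewrite -(ler_pXn2r (isT : (0 < 2)%N)) // nnegrE.
Qed.

End Vec.
Section Proj.
Context (R : realType) (n : nat).
Local Notation vec := 'rV[R]_n.
Local Notation N2 u := (dotp u u).

Lemma N2N (u : vec) : N2 (- u) = N2 u.
Proof. by rewrite dotpNl dotpC dotpNl opprK. Qed.

Lemma N2sym (u v : vec) : N2 (u - v) = N2 (v - u).
Proof. by rewrite -N2N opprB. Qed.

Lemma proj_step (u v w z : vec) (ph g th la gb lb : R) :
  dotp (v - w) (z - w) <= ph -> dotp (v - w) (u - w) <= ph ->
  ph <= g * N2 (v - u) + th * N2 (w - v) + la * N2 (w - u) ->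
  0 <= g <= gb -> 0 <= th <= 1/2 -> 0 <= la <= lb -> lb < 1/2 ->
  N2 (w - u) <= (1 + 2 * gb) / (1 - 2 * lb) * N2 (v - u) /\
  N2 (w - z) <= N2 (v - z) + ((1 + 2 * gb) / (1 - 2 * lb) - 1) * N2 (v - u).
Proof.
move=> h1 h2 h3 /andP[g0 g1] /andP[t0 t1] /andP[l0 l1] lb1.
set A := N2 (w - u); set B := N2 (v - u); set Cc := N2 (w - v).
have eB : B = Cc + A - 2 * dotp (v - w) (u - w).
  rewrite /B; have -> : v - u = (v - w) - (u - w) by rewrite opprB addrA subrK.
  rewrite N2B /Cc /A (N2sym w v) (N2sym w u); lra.
have eZ : N2 (v - z) = Cc + N2 (w - z) - 2 * dotp (v - w) (z - w).
  have -> : v - z = (v - w) + (w - z) by rewrite addrA subrK.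
  have -> : z - w = - (w - z) by rewrite opprB.
  rewrite N2D dotpNr /Cc (N2sym w v); lra.
have A0 : 0 <= A by apply: N2_ge0.
have B0 : 0 <= B by apply: N2_ge0.
have C0 : 0 <= Cc by apply: N2_ge0.
have gC : th * Cc <= Cc / 2 by nra.
have lA : la * A <= lb * A by nra.
have gB : g * B <= gb * B by nra.
have k1 : A * (1 - 2 * lb) <= (1 + 2 * gb) * B.
  move: h2 h3 eB gC lA gB; rewrite -/A -/B -/Cc. lra.
have lbp : 0 < 1 - 2 * lb by lra.
set nu := (1 + 2 * gb) / (1 - 2 * lb).
have enu : nu * (1 - 2 * lb) = 1 + 2 * gb by rewrite /nu mulfVK // gt_eqF.
have k2 : A <= nu * B.
  rewrite -(ler_pM2r lbp); nra.
split => //.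
have : lb * A <= lb * (nu * B) by nra.
have e3 : (nu - 1) * B = 2 * gb * B + 2 * (lb * (nu * B)).
  transitivity ((nu * (1 - 2 * lb) - 1 + 2 * lb * nu) * B); first ring.
  rewrite enu; ring.
rewrite e3; move: h1 h3 eZ gC lA gB; rewrite -/A -/B -/Cc; lra.
Qed.
End Proj.
Section Box.
Local Set Implicit Arguments.
Context (R : realType) (n : nat).
Local Notation vec := 'rV[R]_n.

Lemma cvxf (f : vec -> R) :
  convex_function [set: vec] f ->
  forall (l : R) (a b : vec), 0 <= l -> l <= 1 ->
   f (l *: a + (1 - l) *: b) <= l * f a + (1 - l) * f b.
Proof.
move=> cf l a b l0 l1.
pose q := Itv01 l0 l1.
have := cf q a b; rewrite !inE => /(_ I I).
by [].
Qed.

Lemma cvxs (C : set vec) :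
  convex_set C ->
  forall (l : R) (a b : vec), 0 <= l -> l <= 1 -> C a -> C b ->
   C (l *: a + (1 - l) *: b).
Proof.
move=> cC l a b l0 l1 Ca Cb.
pose q := Itv01 l0 l1.
have := cC a b q; rewrite !inE => /(_ Ca Cb).
by [].
Qed.

Definition box (c : vec) (r : R) (w : vec) := forall i, `|w ord0 i - c ord0 i| <= r.

Lemma box_bound (f : vec -> R) : convex_function [set: vec] f ->
  forall c r, 0 < r -> exists U, forall w, box c r w -> f w <= U.
Proof.
move=> cf c0 r r0.
suff H : forall m (c : vec), exists U, forall w : vec,
    (forall i : 'I_n, (i < m)%N -> `|w ord0 i - c ord0 i| <= r) ->
    (forall i : 'I_n, (m <= i)%N -> w ord0 i = c ord0 i) -> f w <= U.
  have [U HU] := H n c0; exists U => w hw; apply: HU => [i _|i]; first exact: hw.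
  by rewrite leqNgt ltn_ord.
elim=> [|m IH] c.
  exists (f c) => w _ h; suff -> : w = c by [].
  by apply/rowP => i; apply: h.
have [mn|nm] := ltnP m n; last first.
  have [U HU] := IH c; exists U => w h1 h2; apply: HU.
    by move=> i im; apply: h1; apply: ltnW.
  by move=> i; rewrite leqNgt (leq_trans (ltn_ord i) nm).
pose im : 'I_n := Ordinal mn.
pose e : vec := \row_j ((j == im)%:R).
have [Up HUp] := IH (c + r *: e).
have [Um HUm] := IH (c - r *: e).
exists (Num.max Up Um) => w h1 h2.
pose d := w ord0 im - c ord0 im.
have dr : `|d| <= r by apply: h1; rewrite /im /= ltnSn.
pose w' := w - d *: e.
pose l := (1 + d / r) / 2.
have ew : w = l *: (w' + r *: e) + (1 - l) *: (w' - r *: e).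
  apply/rowP => i; rewrite /l /w' /e !mxE; field; by rewrite gt_eqF.
have hl0 : 0 <= l.
  rewrite /l; have := ler_norm (- d); rewrite normrN => hd.
  have : - d / r <= 1 by rewrite ler_pdivrMr // mul1r; lra.
  rewrite mulNr; lra.
have hl1 : l <= 1.
  rewrite /l; have := ler_norm d => hd.
  have : d / r <= 1 by rewrite ler_pdivrMr // mul1r; lra.
  lra.
have coord : forall (s : R) (i : 'I_n),
    (w' + s *: e) ord0 i - (c + s *: e) ord0 i = w ord0 i - c ord0 i - d * (i == im)%:R.
  move=> s i; rewrite !mxE; ring.
have inb : forall s : R, forall i : 'I_n, (i < m)%N ->
    `|(w' + s *: e) ord0 i - (c + s *: e) ord0 i| <= r.
  move=> s i im'; rewrite coord.
  have -> : (i == im) = false by apply/negbTE; apply/eqP => ei; move: im'; rewrite ei /= ltnn.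
  by rewrite mulr0 subr0 h1 // ltnW.
have onb : forall s : R, forall i : 'I_n, (m <= i)%N ->
    (w' + s *: e) ord0 i = (c + s *: e) ord0 i.
  move=> s i mi; apply/eqP; rewrite -subr_eq0 coord.
  have [ei|nei] := eqVneq i im.
    by rewrite ei mulr1 subrr.
  rewrite mulr0 subr0 h2 ?subrr //.
  rewrite ltn_neqAle mi andbT eq_sym; apply: (contra_neq _ nei) => ei; exact: val_inj.
have fp : f (w' + r *: e) <= Num.max Up Um.
  by rewrite le_max HUp //; [apply: inb | apply: onb].
have fm : f (w' - r *: e) <= Num.max Up Um.
  rewrite le_max HUm ?orbT // => i hi; rewrite -scaleNr.
  - by have := inb (- r) i hi; rewrite scaleNr.
  - by have := onb (- r) i hi; rewrite !scaleNr.
have hc := @cvxf f cf l (w' + r *: e) (w' - r *: e) hl0 hl1.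
rewrite {1}ew; apply: le_trans hc _.
have : l * f (w' + r *: e) <= l * Num.max Up Um by rewrite ler_wpM2l.
have : (1 - l) * f (w' - r *: e) <= (1 - l) * Num.max Up Um by rewrite ler_wpM2l // subr_ge0.
lra.
Qed.
End Box.
Section Run.
Local Set Implicit Arguments.
Context (R : realType) (n : nat)
  (f : 'rV[R]_n -> R) (C : set 'rV[R]_n)
  (gbar thbar lbar mu blo bhi Rb delta0 : R)
  (gamma theta lambda : nat -> R)
  (phi : nat -> 'rV[R]_n -> 'rV[R]_n -> 'rV[R]_n -> R)
  (x xh : nat -> 'rV[R]_n) (frec : nat -> R) (xrec : nat -> 'rV[R]_n)
  (ell kl : nat -> nat) (delta sig beta eps : nat -> R)
  (s : nat -> 'rV[R]_n).
Local Notation vec := 'rV[R]_n.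
Local Notation N2 u := (dotp u u).

Definition ell_in k := if k is k'.+1 then ell k' else 0%N.
Definition ps k := kl (ell k).
Definition Dl k := delta (ell k).
Definition FF k := frec (kl (ell k)).
Definition psi k := kl (ell_in k).
Definition Dli k := delta (ell_in k).
Definition Fi k := frec (kl (ell_in k)).
Definition flev k := FF k - Dl k.
Definition tt k := beta k * (f (xh k) - flev k) / enorm (s k).
Definition tk k := tt k / enorm (s k).
Definition tr3 k := f (x k) <= Fi k - Dli k / 2.
Definition tr4 k := ~ tr3 k /\ Rb < sig k.
Definition nu := (1 + 2 * gbar) / (1 - 2 * lbar).

Hypothesis cf : convex_function [set: vec] f.
Hypothesis cC : convex_set C.
Hypothesis hg : 0 <= gbar.
Hypothesis hth : 0 <= thbar < 1 / 2.
Hypothesis hl : 0 <= lbar < 1 / 2.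
Hypothesis hgk : forall k, 0 <= gamma k < gbar.
Hypothesis hthk : forall k, 0 <= theta k < thbar.
Hypothesis hlk : forall k, 0 <= lambda k < lbar.
Hypothesis hmu : 0 <= mu.
Hypothesis hblo : 0 < blo.
Hypothesis hbb : blo <= bhi.
Hypothesis hbhi : bhi < 2 / (2 * mu + nu).
Hypothesis H0x : C (x 0%N).
Hypothesis Hd0 : 0 < delta0.
Hypothesis HR : 0 < Rb.
Hypothesis Hdel0 : delta 0%N = delta0.
Hypothesis Hkl0 : kl 0%N = 0%N.
Hypothesis Hsig0 : sig 0%N = 0.
Hypothesis Hrec0 : frec 0%N = f (x 0%N) /\ xrec 0%N = x 0%N.
Hypothesis HrecA : forall k, f (x k.+1) < frec k ->
          frec k.+1 = f (x k.+1) /\ xrec k.+1 = x k.+1.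
Hypothesis HrecB : forall k, ~ (f (x k.+1) < frec k) ->
          frec k.+1 = frec k /\ xrec k.+1 = xrec k.
Hypothesis H3 : forall k, tr3 k ->
  [/\ ell k = (ell_in k).+1, kl (ell_in k).+1 = k, delta (ell_in k).+1 = delta (ell_in k),
      xh k = x k & sig k.+1 = tt k].
Hypothesis H4 : forall k, ~ tr3 k -> Rb < sig k ->
  [/\ ell k = (ell_in k).+1, kl (ell_in k).+1 = k, delta (ell_in k).+1 = delta (ell_in k) / 2,
      xh k = xrec k & sig k.+1 = tt k].
Hypothesis H5 : forall k, ~ tr3 k -> ~ (Rb < sig k) ->
  [/\ ell k = ell_in k, xh k = x k & sig k.+1 = sig k + tt k].
Hypothesis H6 : forall k,
  [/\ blo <= beta k <= bhi, eps k.+1 <= eps k,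
      0 < eps k <= mu * beta k * (f (xh k) - flev k),
      s k != 0 /\ esubdiff f (eps k) (xh k) (s k)
    & rel_err_tol (gamma k) (theta k) (lambda k) (phi k) /\
      inexact_proj C (phi k) (xh k) (xh k - tk k *: s k) (x k.+1)].

Definition trans k := tr3 k \/ tr4 k.

Lemma cases k : [\/ tr3 k, tr4 k | ~ tr3 k /\ ~ (Rb < sig k)].
Proof.
case: (pselect (tr3 k)) => h3; first by constructor 1.
case: (pselect (Rb < sig k)) => h4; first by constructor 2.
by constructor 3.
Qed.

Lemma trans_ps k : trans k -> [/\ ps k = k, FF k = frec k & xh k = x k \/ xh k = xrec k].
Proof.
rewrite /ps /FF; case=> [h|[h1 h2]].
  by case: (H3 _ h) => -> -> _ -> _; split => //; left.
by case: (H4 _ h1 h2) => -> -> _ -> _; split => //; right.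
Qed.

Lemma notrans k : ~ trans k -> [/\ ps k = psi k, Dl k = Dli k, FF k = Fi k, xh k = x k
   & sig k.+1 = sig k + tt k].
Proof.
move=> h; have h3 : ~ tr3 k by move=> ?; apply: h; left.
have h4 : ~ (Rb < sig k) by move=> ?; apply: h; right.
by case: (H5 _ h3 h4) => e1 e2 e3; rewrite /ps /Dl /FF /psi /Dli /Fi e1.
Qed.

Lemma Dl_step k : Dl k = Dli k \/ Dl k = Dli k / 2.
Proof.
rewrite /Dl /Dli; case: (cases k) => [h|h|[h1 h2]].
- by case: (H3 _ h) => -> _ -> _ _; left.
- by case: h => h1 h2; case: (H4 _ h1 h2) => -> _ -> _ _; right.
- by case: (H5 _ h1 h2) => -> _ _; left.
Qed.

Lemma Dli0 : Dli 0 = delta0. Proof. by rewrite /Dli /= Hdel0. Qed.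
Lemma psi0 : psi 0 = 0%N. Proof. by rewrite /psi /= Hkl0. Qed.
Lemma Fi0 : Fi 0 = frec 0. Proof. by rewrite /Fi /= Hkl0. Qed.

Lemma Dl_gt0 k : 0 < Dl k.
Proof.
elim: k => [|k IH].
  by case: (Dl_step 0) => ->; rewrite Dli0 // divr_gt0.
by case: (Dl_step k.+1) => ->; rewrite /Dli /= -/(Dl k) // divr_gt0.
Qed.

Lemma Dl_le k : Dl k.+1 <= Dl k.
Proof.
have := Dl_gt0 k; case: (Dl_step k.+1) => ->; rewrite /Dli /= -/(Dl k); lra.
Qed.

Lemma frec_le k : frec k.+1 <= frec k /\ frec k.+1 <= f (x k.+1).
Proof.
case: (pselect (f (x k.+1) < frec k)) => h.
  by case: (HrecA _ h) => -> _; split; [apply: ltW|].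
by case: (HrecB _ h) => -> _; split => //; rewrite leNgt; apply/negP.
Qed.

Lemma frec_x k : frec k <= f (x k).
Proof. by case: k => [|k]; [rewrite Hrec0.1 | case: (frec_le k)]. Qed.

Lemma frec_anti i j : (i <= j)%N -> frec j <= frec i.
Proof.
move=> /subnK <-; elim: (j - i)%N => [|d IH]; first by rewrite add0n.
by rewrite addSn; apply: le_trans IH; case: (frec_le (d + i)).
Qed.

Lemma xrec_prop k : f (xrec k) = frec k /\ exists2 j, (j <= k)%N & xrec k = x j.
Proof.
elim: k => [|k [IH1 [j jk IH2]]].
  by rewrite Hrec0.2 Hrec0.1; split => //; exists 0%N.
case: (pselect (f (x k.+1) < frec k)) => h.
  by case: (HrecA _ h) => -> ->; split => //; exists k.+1.
by case: (HrecB _ h) => -> ->; split => //; exists j => //; apply: leqW.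
Qed.

Lemma xh_prop k : xh k = x k \/ xh k = xrec k.
Proof.
case: (cases k) => [h|h|[h1 h2]].
- by case: (H3 _ h) => _ _ _ -> _; left.
- by case: h => h1 h2; case: (H4 _ h1 h2) => _ _ _ -> _; right.
- by case: (H5 _ h1 h2) => _ -> _; left.
Qed.

Lemma C_x k : C (x k).
Proof. by case: k => [|k] //; case: (H6 k) => _ _ _ _ [_ []]. Qed.

Lemma C_xh k : C (xh k).
Proof.
case: (xh_prop k) => ->; first exact: C_x.
by case: (xrec_prop k) => _ [j _ ->]; apply: C_x.
Qed.

Lemma ps_le k : (ps k <= k)%N.
Proof.
elim: k => [|k IH].
  case: (pselect (trans 0)) => h; first by case: (trans_ps h) => ->.
  by case: (notrans h) => -> _ _ _ _; rewrite psi0.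
case: (pselect (trans k.+1)) => h; first by case: (trans_ps h) => ->.
by case: (notrans h) => -> _ _ _ _; rewrite /psi /= -/(ps k) ltnW.
Qed.

Lemma psi_le k : (psi k <= k)%N.
Proof. by case: k => [|k]; [rewrite psi0 | rewrite /psi /= -/(ps k) ltnW // ltnS ps_le]. Qed.

Lemma ps_step k : ps k = k \/ ps k = psi k.
Proof.
case: (pselect (trans k)) => h; first by case: (trans_ps h) => ->; left.
by case: (notrans h) => ->; right.
Qed.

Lemma ps_mono i j : (i <= j)%N -> (ps i <= ps j)%N.
Proof.
move=> /subnK <-; elim: (j - i)%N => [|d IH]; first by rewrite add0n.
apply: leq_trans IH _; rewrite addSn.
case: (ps_step (d + i).+1) => ->; first by apply: leqW; apply: ps_le.
by rewrite /psi /=.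
Qed.

Lemma ps_idem k : ps (ps k) = ps k.
Proof.
elim: k => [|k IH].
  have e : ps 0 = 0%N by apply/eqP; rewrite -leqn0 ps_le.
  by rewrite !e.
case: (ps_step k.+1) => e; first by rewrite !e.
by rewrite e /psi /= -/(ps k).
Qed.

Lemma Fi_S k : Fi k.+1 = FF k. Proof. by []. Qed.
Lemma Dli_S k : Dli k.+1 = Dl k. Proof. by []. Qed.
Lemma psi_S k : psi k.+1 = ps k. Proof. by []. Qed.

Lemma tr3_Dl k : tr3 k -> Dl k = Dli k.
Proof. by move=> h; rewrite /Dl /Dli; case: (H3 _ h) => -> _ -> _ _. Qed.
Lemma tr4_Dl k : tr4 k -> Dl k = Dli k / 2.
Proof. by case=> h1 h2; rewrite /Dl /Dli; case: (H4 _ h1 h2) => -> _ -> _ _. Qed.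
Lemma tr3_xh k : tr3 k -> xh k = x k.
Proof. by move=> h; case: (H3 _ h). Qed.
Lemma tr4_xh k : tr4 k -> xh k = xrec k.
Proof. by case=> h1 h2; case: (H4 _ h1 h2). Qed.
Lemma tr3_sig k : tr3 k -> sig k.+1 = tt k.
Proof. by move=> h; case: (H3 _ h). Qed.
Lemma tr4_sig k : tr4 k -> sig k.+1 = tt k.
Proof. by case=> h1 h2; case: (H4 _ h1 h2). Qed.

Lemma frec_FF k : frec k <= FF k.
Proof. by rewrite /FF -/(ps k); apply: frec_anti; apply: ps_le. Qed.

Lemma Pinv k : FF k - Dl k / 2 < frec k.
Proof.
elim: k => [|k IH].
  have := Dl_gt0 0; case: (pselect (trans 0)) => h.
    by case: (trans_ps h) => _ -> _; lra.
  by case: (notrans h) => _ -> -> _ _; rewrite Fi0 Dli0 => ?; lra.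
have := Dl_gt0 k.+1; case: (pselect (trans k.+1)) => h.
  by case: (trans_ps h) => _ -> _; lra.
case: (notrans h) => _ -> -> _ _; rewrite Fi_S Dli_S => _.
have n3 : ~ tr3 k.+1 by move=> ?; apply: h; left.
have h1 : FF k - Dl k / 2 < f (x k.+1).
  by rewrite ltNge; apply/negP; rewrite -Fi_S -Dli_S.
case: (pselect (f (x k.+1) < frec k)) => hh.
  by case: (HrecA _ hh) => -> _.
by case: (HrecB _ hh) => -> _.
Qed.

Lemma newrec k : tr3 k -> frec k = f (x k).
Proof.
case: k => [|k] h.
  have := Dl_gt0 0; move: h; rewrite /tr3 Fi0 Dli0 Hrec0.1 => h; lra.
have hh : f (x k.+1) < frec k.
  have := Pinv k; move: h; rewrite /tr3 Fi_S Dli_S => h; lra.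
by case: (HrecA _ hh).
Qed.

Lemma FF_mono k : FF k.+1 <= FF k.
Proof.
case: (pselect (trans k.+1)) => h.
  case: (trans_ps h) => _ -> _; apply: le_trans (frec_FF k).
  by case: (frec_le k).
by case: (notrans h) => _ _ -> _ _.
Qed.

Lemma FF_drop k : tr3 k.+1 -> FF k.+1 <= FF k - Dl k / 2.
Proof.
move=> h; case: (trans_ps (or_introl h)) => _ -> _.
by rewrite newrec //; move: h; rewrite /tr3 Fi_S Dli_S.
Qed.

Lemma Dgap k : Dl k / 2 <= f (xh k) - flev k.
Proof.
rewrite /flev; have := Dl_gt0 k.
case: (cases k) => [h|h|[h1 h2]].
- rewrite tr3_xh //; case: (trans_ps (or_introl h)) => _ -> _.
  have := frec_x k; lra.
- rewrite tr4_xh //; case: (trans_ps (or_intror h)) => _ -> _.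
  case: (xrec_prop k) => -> _; lra.
- case: (H5 _ h1 h2) => e1 -> _.
  rewrite /FF /Dl e1 -/(Fi k) -/(Dli k).
  have : Fi k - Dli k / 2 < f (x k) by rewrite ltNge; apply/negP.
  lra.
Qed.

Lemma Dpos k : 0 < f (xh k) - flev k.
Proof. have := Dgap k; have := Dl_gt0 k; lra. Qed.

Lemma start_le k : ps k = k -> f (xh k) <= frec k.
Proof.
move=> pk; case: (cases k) => [h|h|[h1 h2]].
- by rewrite tr3_xh // newrec.
- by rewrite tr4_xh //; case: (xrec_prop k) => ->.
- have nt : ~ trans k by case => [/h1|[_ /h2]].
  case: (notrans nt) => e1 _ _ -> _.
  case: k pk e1 {h1 h2 nt} => [|k] pk e1; first by rewrite Hrec0.1.
  by move: (ps_le k); rewrite -psi_S -e1 pk ltnn.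
Qed.

Lemma enorm_s k : 0 < enorm (s k).
Proof. by case: (H6 k) => _ _ _ [h _] _; apply: enorm_gt0. Qed.

Lemma beta_pos k : 0 < beta k.
Proof. by case: (H6 k) => /andP[h _] _ _ _ _; apply: lt_le_trans h. Qed.

Lemma tt_pos k : 0 < tt k.
Proof. by rewrite /tt divr_gt0 ?mulr_gt0 ?beta_pos ?Dpos ?enorm_s. Qed.

Lemma sig_sum k : sig k = \sum_(psi k <= j < k) tt j.
Proof.
elim: k => [|k IH]; first by rewrite psi0 big_geq.
rewrite psi_S; case: (cases k) => [h|h|[h1 h2]].
- rewrite tr3_sig //; case: (trans_ps (or_introl h)) => -> _ _.
  by rewrite big_nat1.
- rewrite tr4_sig //; case: (trans_ps (or_intror h)) => -> _ _.
  by rewrite big_nat1.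
- have nt : ~ trans k by case => [/h1|[_ /h2]].
  case: (notrans nt) => -> _ _ _ ->.
  by rewrite IH big_nat_recr //= psi_le.
Qed.

Lemma nu_ge1 : 1 <= nu.
Proof.
have := hg; rewrite /nu ler_pdivlMr; case/andP: hl => ? ?; lra.
Qed.

Lemma bnu k : beta k * (2 * mu + nu) <= 2.
Proof.
have p : 0 < 2 * mu + nu by have := nu_ge1; have := hmu; lra.
have : bhi * (2 * mu + nu) < 2 by rewrite -ltr_pdivlMr.
case: (H6 k) => /andP[_ b2] _ _ _ _.
have : beta k * (2 * mu + nu) <= bhi * (2 * mu + nu) by rewrite ler_pM2r.
lra.
Qed.

Lemma descent_both k z : C z ->
  N2 (x k.+1 - z) <= N2 (xh k - z) - 2 * tk k * (flev k - f z) /\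
  N2 (x k.+1 - xh k) <= nu * tt k ^+ 2.
Proof.
move=> Cz.
case: (H6 k) => /andP[b1 b2] _ /andP[e1 e2] [sn sg] [rt [Cw pj]].
set u := xh k; set w := x k.+1; set v := u - tk k *: s k.
have [ph0 phle] := rt u v w; rewrite !enorm_sq in phle.
have /andP[g0 g1] := hgk k; have /andP[t0 t1] := hthk k; have /andP[l0 l1] := hlk k.
have /andP[th0 th1] := hth; have /andP[hl0 hl1] := hl.
have [A Bz] := @proj_step R n u v w z _ (gamma k) (theta k) (lambda k) gbar lbar (pj z Cz) (pj u (C_xh k)) phle
  (ltac:(apply/andP; split; [exact: g0|exact: ltW]) : 0 <= gamma k <= gbar)
  (ltac:(apply/andP; split; [exact: t0|lra]) : 0 <= theta k <= 1/2)
  (ltac:(apply/andP; split; [exact: l0|exact: ltW]) : 0 <= lambda k <= lbar) hl1.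
rewrite -/nu in A Bz.
set E := enorm (s k); set T := tk k; set D := f u - flev k.
have E0 : 0 < E := enorm_s k.
have D0 : 0 < D := Dpos k.
have bp : 0 < beta k := beta_pos k.
have T0 : 0 < T by rewrite /T /tk divr_gt0 // tt_pos.
have eN : N2 (s k) = E ^+ 2 by rewrite -enorm_sq.
have hT : T * E ^+ 2 = beta k * D.
  by rewrite /T /tk /tt -/u -/D -/E; field; rewrite gt_eqF.
have htt : tt k = T * E.
  by rewrite /T /tk divfK // gt_eqF.
have evu : N2 (v - u) = T ^+ 2 * E ^+ 2.
  rewrite /v addrC addKr N2N dotpZl dotpZr eN /T; ring.
have evz : N2 (v - z) = N2 (u - z) + T ^+ 2 * E ^+ 2 - 2 * (T * dotp (u - z) (s k)).
  have -> : v - z = (u - z) - T *: s k by rewrite /v /T addrAC.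
  rewrite [LHS]N2B dotpZl dotpZr eN dotpZr; ring.
have hsub := sg z.
have ed : dotp (s k) (z - u) = - dotp (u - z) (s k).
  by rewrite dotpC -dotpNl opprB.
rewrite ed in hsub.
have kb := bnu k.
have nu1 := nu_ge1.
split; last first.
  rewrite -/w -/u htt; move: A; rewrite evu; nra.
have i1 : - (T * dotp (u - z) (s k)) <= T * (f z - f u + eps k) by nra.
have i2 : T * eps k <= T * (mu * beta k * D) by rewrite ler_pM2l.
have i3 : T * (D * (beta k * (2 * mu + nu) - 2)) <= 0.
  by rewrite pmulr_rle0 // pmulr_rle0 // subr_le0.
have i4 : nu * (T ^+ 2 * E ^+ 2) = T * (nu * (beta k * D)) by rewrite -hT; ring.
have ef : f u = flev k + D by rewrite /D; ring.
rewrite -/w -/u.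
move: Bz; rewrite evz evu mulrBl mul1r i4 => Bz.
rewrite ef in i1.
have i5 : T ^+ 2 * E ^+ 2 = T * (beta k * D) by rewrite -hT; ring.
rewrite i5 in Bz.
nra.
Qed.

Lemma archi_nat (a : R) : exists N : nat, a < N%:R.
Proof.
case: (leP 0 a) => h; first by exists (Num.Def.archi_bound a); apply: archi_boundP.
by exists 0%N.
Qed.

Lemma eps_le0 k : eps k <= eps 0%N.
Proof.
elim: k => [//|k IH]; apply: le_trans IH.
by case: (H6 k).
Qed.

Lemma FF_anti i j : (i <= j)%N -> FF j <= FF i.
Proof.
move=> /subnK <-; elim: (j - i)%N => [|d IH]; first by rewrite add0n.
by rewrite addSn; apply: le_trans IH; apply: FF_mono.
Qed.

Lemma Dl_anti i j : (i <= j)%N -> Dl j <= Dl i.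
Proof.
move=> /subnK <-; elim: (j - i)%N => [|d IH]; first by rewrite add0n.
by rewrite addSn; apply: le_trans IH; apply: Dl_le.
Qed.

Section Core.
Variables (y : 'rV[R]_n) (m : R).
Hypothesis Cy : C y.
Hypothesis fym : f y < m.
Hypothesis hm : forall k, m <= f (x k).

Lemma frec_m k : m <= frec k.
Proof. by case: (xrec_prop k) => <- [j _ ->]. Qed.

Lemma FF_m k : m <= FF k.
Proof. exact: frec_m. Qed.

Lemma fxh_m k : m <= f (xh k).
Proof. by case: (xh_prop k) => ->; [|case: (xrec_prop k) => ->]; rewrite ?frec_m. Qed.

Lemma sbound (c : 'rV[R]_n) (r : R) : 0 < r ->
  exists S, 0 < S /\ forall k, @box R n c r (xh k) -> enorm (s k) <= S.
Proof.
move=> r0.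
have [U HU] := @box_bound R n f cf c (r + 1) (ltr_wpDr ler01 r0 : 0 < r + 1).
exists (Num.max 1 (U - m + eps 0%N)); split; first by rewrite lt_max ltr01.
move=> k hb.
case: (H6 k) => _ _ _ [sn sg] _.
set e := enorm (s k).
have e0 : 0 < e := enorm_s k.
set y' := xh k + e^-1 *: s k.
have hy' : @box R n c (r + 1) y'.
  move=> i; rewrite /y' !mxE.
  have hs : `|s k ord0 i| <= e by apply: coord_abs2; [exact: ltW | rewrite /e enorm_sq].

  have : `|e^-1 * s k ord0 i| <= 1.
    by rewrite normrM gtr0_norm ?invr_gt0 // ler_pdivrMl // mulr1.
  have := hb i; have := ler_normD (xh k ord0 i - c ord0 i) (e^-1 * s k ord0 i).
  have -> : xh k ord0 i - c ord0 i + e^-1 * s k ord0 i = xh k ord0 i + e^-1 * s k ord0 i - c ord0 i.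
    by ring.
  lra.
have h1 := sg y'.
have h2 := HU _ hy'.
have ed : dotp (s k) (y' - xh k) = e.
  rewrite /y' addrAC subrr add0r dotpZr -enorm_sq -/e; field; by rewrite gt_eqF.
rewrite ed in h1.
have := eps_le0 k; have := fxh_m k.
have : U - m + eps 0%N <= Num.max 1 (U - m + eps 0%N) by rewrite le_max lexx orbT.
lra.
Qed.

Lemma sig_ge0 k : 0 <= sig k.
Proof. by rewrite sig_sum; apply: sumr_ge0 => i _; apply: ltW; apply: tt_pos. Qed.

Lemma step_coord k (i : 'I_n) : xh k = x k ->
  `|x k.+1 ord0 i - x k ord0 i| <= nu * tt k.
Proof.
move=> e; have [_ h] := descent_both k H0x.
have t0 := tt_pos k; have n1 := nu_ge1.
have h2 : N2 (x k.+1 - xh k) <= (nu * tt k) ^+ 2.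
  apply: le_trans h _; move: t0; set T := tt k => t0.
  have : 0 <= nu * T ^+ 2 * (nu - 1).
    apply: mulr_ge0; [apply: mulr_ge0; [lra | exact: sqr_ge0] | lra].
  have -> : (nu * T) ^+ 2 = nu * T ^+ 2 + nu * T ^+ 2 * (nu - 1) by ring.
  lra.
rewrite e in h2.
have hp : 0 <= nu * tt k by apply: mulr_ge0; lra.
by have := @coord_abs2 R n (x k.+1 - x k) i (nu * tt k) hp h2; rewrite !mxE.
Qed.

Lemma caseB : (exists K, forall k, (K <= k)%N -> ~ trans k) -> False.
Proof.
case=> K hK.
have nt k : (K <= k)%N -> [/\ ps k = psi k, Dl k = Dli k, FF k = Fi k, xh k = x k
   & sig k.+1 = sig k + tt k] := fun h => notrans (hK k h).
have sle k : (K <= k)%N -> sig k <= Rb.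
  move=> h; rewrite leNgt; apply/negP => hs.
  apply: (hK k h); right; split => //.
  by move=> h3; apply: (hK k h); left.
have ssum d : sig (K + d)%N = sig K + \sum_(K <= i < K + d) tt i.
  elim: d => [|d IH]; first by rewrite addn0 big_geq // addr0.
  rewrite addnS; case: (nt (K + d)%N (leq_addr _ _)) => _ _ _ _ ->.
  by rewrite IH big_nat_recr //= ?leq_addr // addrA.
have sumle d : \sum_(K <= i < K + d) tt i <= Rb.
  have := sle _ (leq_addr d K); rewrite ssum; have := sig_ge0 K; lra.
have DlK d : Dl (K + d)%N = Dl K.
  elim: d => [|d IH]; first by rewrite addn0.
  by rewrite addnS; case: (nt (K + d).+1 (leqW (leq_addr _ _))) => _ -> _ _ _; rewrite Dli_S IH.
have coordb d i : `|x (K + d)%N ord0 i - x K ord0 i| <= nu * \sum_(K <= j < K + d) tt j.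
  elim: d => [|d IH]; first by rewrite addn0 subrr normr0 big_geq // mulr0.
  rewrite addnS big_nat_recr //= ?leq_addr // mulrDr.
  case: (nt (K + d)%N (leq_addr _ _)) => _ _ _ exh _.
  have := step_coord i exh.
  have := ler_normD (x (K + d).+1 ord0 i - x (K + d)%N ord0 i) (x (K + d)%N ord0 i - x K ord0 i).
  rewrite addrA subrK; lra.
have n1 := nu_ge1.
have hr : 0 < nu * Rb by rewrite mulr_gt0 // (lt_le_trans ltr01).
have [S [S0 HS]] := @sbound (x K) (nu * Rb) hr.
have hb d : enorm (s (K + d)%N) <= S.
  apply: HS => i; case: (nt (K + d)%N (leq_addr _ _)) => _ _ _ -> _.
  apply: le_trans (coordb d i) _; rewrite ler_pM2l ?(lt_le_trans ltr01) //.
have DK0 := Dl_gt0 K.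
pose c0 := blo * (Dl K / 2) / S.
have c0p : 0 < c0 by rewrite /c0 divr_gt0 // mulr_gt0 // divr_gt0.
have ttlb d : c0 <= tt (K + d)%N.
  rewrite /tt /c0; have := Dgap (K + d)%N; rewrite DlK => dg.
  have e0 := enorm_s (K + d)%N.
  case: (H6 (K + d)%N) => /andP[b1 b2] _ _ _ _.
  have dp : 0 < Dl K / 2 by rewrite divr_gt0.
  apply: (@le_trans _ _ (beta (K + d)%N * (f (xh (K + d)%N) - flev (K + d)%N) / S)).
    rewrite ler_pM2r ?invr_gt0 //; apply: ler_pM => //; [exact: ltW | exact: ltW].
  rewrite ler_pM2l ?mulr_gt0 ?beta_pos ?Dpos // lef_pV2 ?posrE //.
have [N hN] := archi_nat (Rb / c0).
have : N%:R * c0 <= \sum_(K <= i < K + N) tt i.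
  have -> : N%:R * c0 = \sum_(K <= i < K + N) c0.
    by rewrite sumr_const_nat addKn mulr_natl.
  rewrite big_nat [X in _ <= X]big_nat; apply: ler_sum => i /andP[h1 h2].
  by rewrite -(subnKC h1) ttlb.
have := sumle N.
move: hN; rewrite ltr_pdivrMr // => hN.
lra.
Qed.

Lemma Dl_no4 k : ~ tr4 k -> Dl k = Dli k.
Proof.
move=> h; case: (cases k) => [h3|h4|[h1 h2]]; first exact: tr3_Dl.
  by case: (h h4).
have nt : ~ trans k by case => [/h1|[_ /h2]].
by case: (notrans nt).
Qed.

Lemma caseE : (exists K, forall k, (K <= k)%N -> ~ tr4 k) -> False.
Proof.
case=> K hK.
have DlK k : (K <= k)%N -> Dl k = Dl K.
  move=> /subnK <-; elim: (k - K)%N => [|d IH]; first by rewrite add0n.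
  rewrite addSn Dl_no4; first by rewrite Dli_S.
  by apply: hK; rewrite ltnW // ltnS leq_addl.
have DK0 := Dl_gt0 K.
have FFN N : exists k, (K <= k)%N /\ FF k <= FF K - N%:R * (Dl K / 2).
  elim: N => [|N [k [hk hF]]]; first by exists K; split => //; rewrite mul0r subr0.
  case: (pselect (exists k', (k < k')%N /\ trans k')) => [[k' [hk' ht]]|hn]; last first.
    exfalso; apply: caseB; exists k.+1 => k'' hk'' ht; apply: hn; exists k''; split => //.
  case: k' hk' ht => [//|k''] hk' ht.
  have K1 : (K <= k''.+1)%N by apply: leq_trans hk (ltnW hk').
  have h3 : tr3 k''.+1 by case: ht => // h4; case: (hK _ K1 h4).
  exists k''.+1; split => //.
  have := FF_drop _ h3; rewrite (DlK k'') ?(leq_trans hk) // => h1.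
  have := @FF_anti k k'' hk'; rewrite -natr1 mulrDl mul1r; lra.
have [N hN] := archi_nat ((FF K - m) / (Dl K / 2)).
have [k [_ hF]] := FFN N.
have := FF_m k; move: hN; rewrite ltr_pdivrMr ?divr_gt0 // => hN.
lra.
Qed.
Lemma tk_pos k : 0 < tk k.
Proof. by rewrite /tk divr_gt0 ?tt_pos ?enorm_s. Qed.

Lemma tt_tk k : tt k = tk k * enorm (s k).
Proof. by rewrite /tk divfK // gt_eqF // enorm_s. Qed.

Lemma caseC : (forall K, exists k, (K <= k)%N /\ tr4 k) -> False.
Proof.
move=> inf4.
have hR := HR; have hd0 := Hd0.
pose G := m - f y.
have G0 : 0 < G by rewrite /G subr_gt0.
have Dl0 N : exists K, Dl K <= delta0 / 2 ^+ N.
  elim: N => [|N [K hK]].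
    exists 0%N; rewrite expr0 divr1 -Dli0.
    by case: (Dl_step 0) => e; rewrite e; have := Dl_gt0 0; rewrite e; lra.
  have [k [hk h4]] := inf4 K.+1.
  case: k hk h4 => [//|k] hk h4.
  exists k.+1; rewrite tr4_Dl // Dli_S exprS.
  have := @Dl_anti K k hk.
  have -> : delta0 / (2 * 2 ^+ N) = delta0 / 2 ^+ N / 2.
    by field; rewrite expf_neq0 // pnatr_eq0.
  lra.
have Dsmall e : 0 < e -> exists K, forall k, (K <= k)%N -> Dl k <= e.
  move=> e0; have [N hN] := archi_nat (delta0 / e).
  have [K hK] := Dl0 N; exists K => k hk.
  apply: (le_trans (@Dl_anti K k hk)); apply: (le_trans hK).
  have h2 : (N%:R : R) < 2 ^+ N by rewrite -natrX ltr_nat ltn_expl.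
  have p2 : 0 < (2 : R) ^+ N by rewrite exprn_gt0.
  rewrite ler_pdivrMr //; move: hN; rewrite ltr_pdivrMr // => hN.
  have : e * N%:R <= e * 2 ^+ N by rewrite ler_pM2l // ltW.
  lra.
have two0 : (0 : R) < 2 by lra.
have [K0 hK0] := Dsmall (G / 2) (divr_gt0 G0 two0).
have dy k : (K0 <= k)%N -> N2 (x k.+1 - y) <= N2 (xh k - y).
  move=> hk; have [h _] := descent_both k Cy.
  have := tk_pos k; have := hK0 k hk; have := FF_m k; rewrite /flev in h *.
  have : f y = m - G by rewrite /G; ring.
  move=> e1 h1 h2 h3; rewrite e1 in h.
  have : 0 <= tk k * (FF k - Dl k - (m - G)) by rewrite mulr_ge0 // ?ltW //; lra.
  lra.
pose M2 := \sum_(j < K0.+1) N2 (x j - y).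
have M20 : 0 <= M2 by apply: sumr_ge0 => j _; apply: N2_ge0.
have memb j : (j <= K0)%N -> N2 (x j - y) <= M2.
  move=> hj; rewrite /M2 (bigD1 (Ordinal (hj : (j < K0.+1)%N))) //= lerDl.
  by apply: sumr_ge0 => i _; apply: N2_ge0.
have bnd k : forall j, (j <= k)%N -> N2 (x j - y) <= M2.
  elim: k => [|k IH] j hj.
    by apply: memb; move: hj; rewrite leqn0 => /eqP ->.
  rewrite leq_eqVlt in hj; case/orP: hj => [/eqP ->|hj]; last exact: IH.
  case: (leqP k.+1 K0) => hk; first exact: memb.
  apply: le_trans (dy k hk) _.
  case: (xh_prop k) => ->; first exact: IH.
  by case: (xrec_prop k) => _ [j' hj' ->]; apply: IH.
have bxh k : N2 (xh k - y) <= M2.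
  case: (xh_prop k) => ->; first exact: bnd (leqnn k).
  by case: (xrec_prop k) => _ [j' hj' ->]; apply: bnd hj'.
have M21 : 0 < M2 + 1 by lra.
have [S [S0 HS]] := @sbound y (M2 + 1) M21.
have hS k : enorm (s k) <= S.
  apply: HS => i; have := @coord_abs R n (xh k - y) i M2 (bxh k).
  by rewrite !mxE.
pose dd := Rb * G ^+ 2 / (2 * S * M2 + 1).
have dd0 : 0 < dd.
  have SM : 0 <= 2 * S * M2 by rewrite !mulr_ge0 // ltW.
  have h : 0 < Rb * G ^+ 2 by rewrite mulr_gt0 // exprn_gt0.
  by rewrite /dd; apply: divr_gt0 => //; lra.
have [K1 hK1] := Dsmall dd dd0.
have [k2 [hk2 h42]] := inf4 (maxn K0 K1).
have [k3 [hk3 h43]] := inf4 k2.+1.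
case: k3 hk3 h43 => [//|k3] hk3 h43.
pose k0 := ps k3.
have pk2 : ps k2 = k2 by case: (trans_ps (or_intror h42)).
have k0ge : (k2 <= k0)%N by rewrite -{1}pk2; apply: ps_mono.
have k0lt : (k0 <= k3)%N by apply: ps_le.
have pk0 : ps k0 = k0 by apply: ps_idem.
have phase j : (k0 <= j)%N -> (j <= k3)%N -> ps j = k0.
  move=> h1 h2; apply/eqP; rewrite eqn_leq; apply/andP; split.
    exact: ps_mono.
  by rewrite -{1}pk0; apply: ps_mono.
have notr j : (k0 < j)%N -> (j <= k3)%N -> ~ trans j.
  move=> h1 h2 ht; case: (trans_ps ht) => e _ _.
  have e2 := phase j (ltnW h1) h2; rewrite e in e2.
  by rewrite e2 ltnn in h1.
have DlP d : (k0 + d <= k3)%N -> Dl (k0 + d)%N = Dl k0.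
  elim: d => [|d IH] h; first by rewrite addn0.
  move: h; rewrite addnS => h.
  have hq : (k0 < (k0 + d).+1)%N by rewrite ltnS leq_addr.
  case: (notrans (notr (k0 + d).+1 hq h)) => _ -> _ _ _.
  by rewrite Dli_S IH // ltnW.
have xhP j : (k0 < j)%N -> (j <= k3)%N -> xh j = x j.
  by move=> h1 h2; case: (notrans (notr j h1 h2)).
have K0k0 : (K0 <= k0)%N by apply: leq_trans k0ge; apply: leq_trans hk2; apply: leq_maxl.
have K1k0 : (K1 <= k0)%N by apply: leq_trans k0ge; apply: leq_trans hk2; apply: leq_maxr.
pose dl := Dl k0.
have dl0 : 0 < dl := Dl_gt0 k0.
have dlG : dl <= G / 2 := hK0 k0 K0k0.
have dld : dl <= dd := hK1 k0 K1k0.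
pose p := xh k0.
have fp : f p <= frec k0 by apply: start_le.
have fk0 := frec_m k0.
pose la := 2 * dl / G.
have la0 : 0 <= la by rewrite /la divr_ge0 // ?mulr_ge0 // ltW.
have la1 : la <= 1 by rewrite /la ler_pdivrMr //; lra.
pose z := la *: y + (1 - la) *: p.
have Cz : C z by apply: cvxs => //; apply: C_xh.
have fz : f z <= frec k0 - 2 * dl.
  have h := @cvxf R n f cf la y p la0 la1.
  have h1 : (1 - la) * f p <= (1 - la) * frec k0 by rewrite ler_wpM2l // subr_ge0.
  have h2 : la * G = 2 * dl by rewrite /la mulfVK // gt_eqF.
  have : la * f y = la * m - la * G by rewrite /G; ring.
  have : la * m <= la * frec k0 by rewrite ler_wpM2l.
  rewrite -/z in h; lra.
have gap j : (k0 <= j)%N -> (j <= k3)%N -> dl <= flev j - f z.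
  move=> h1 h2; rewrite /flev /FF -/(ps j) (phase j h1 h2).
  have -> : Dl j = dl by rewrite /dl -(subnKC h1) DlP // subnKC.
  lra.
have tele d : (k0 + d <= k3)%N ->
    N2 (x (k0 + d).+1 - z) + 2 * dl * \sum_(k0 <= i < (k0 + d).+1) tk i <= N2 (p - z).
  elim: d => [|d IH] h.
    rewrite addn0 big_nat1; have [hd _] := descent_both k0 Cz.
    have := gap k0 (leqnn _) (leq_trans (leq_addr _ _) h).
    rewrite addn0 in h *; have := tk_pos k0 => t0 g0.
    have : tk k0 * dl <= tk k0 * (flev k0 - f z) by rewrite ler_pM2l.
    rewrite -/p in hd; lra.
  rewrite addnS in h *.
  have h' : (k0 + d <= k3)%N by apply: ltnW.
  have hI := IH h'.
  rewrite big_nat_recr /=; last by apply/leqW/leq_addr.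
  have [hd _] := descent_both (k0 + d).+1 Cz.
  rewrite xhP in hd; [|by rewrite ltnS leq_addr|exact: h].
  have g0 := gap (k0 + d).+1 (leqW (leq_addr _ _)) h.
  have t0 := tk_pos (k0 + d).+1.
  have : tk (k0 + d).+1 * dl <= tk (k0 + d).+1 * (flev (k0 + d).+1 - f z) by rewrite ler_pM2l.
  lra.
have := tele (k3 - k0)%N; rewrite subnKC // => /(_ (leqnn _)) hT.
pose T := \sum_(k0 <= i < k3.+1) tk i.
have T0 : 0 <= T by apply: sumr_ge0 => i _; apply: ltW; apply: tk_pos.
have hsum : \sum_(k0 <= i < k3.+1) tt i <= S * T.
  rewrite /T mulr_sumr; apply: ler_sum => i _; rewrite tt_tk mulrC.
  by rewrite ler_pM2r ?tk_pos ?hS.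
have hsig : Rb < \sum_(k0 <= i < k3.+1) tt i.
  by case: h43 => _; rewrite sig_sum psi_S.
have epz : p - z = la *: (p - y).
  by apply/rowP => i; rewrite !mxE; ring.
have hpz : N2 (p - z) = la ^+ 2 * N2 (p - y).
  by rewrite epz dotpZl dotpZr; ring.
have bp : N2 (p - y) <= M2 := bxh k0.
have N0 : 0 <= N2 (x k3.+1 - z) := @N2_ge0 R n _.
have i1 : 2 * dl * T <= la ^+ 2 * M2.
  have : la ^+ 2 * N2 (p - y) <= la ^+ 2 * M2 by rewrite ler_wpM2l // sqr_ge0.
  rewrite -/T in hT; lra.
have i2 : G ^+ 2 * T <= 2 * dl * M2.
  have e1 : la ^+ 2 = 4 * dl ^+ 2 / G ^+ 2 by rewrite /la; field; rewrite gt_eqF.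
  rewrite e1 in i1.
  have : G ^+ 2 * (2 * dl * T) <= G ^+ 2 * (4 * dl ^+ 2 / G ^+ 2 * M2).
    by rewrite ler_wpM2l // sqr_ge0.
  have -> : G ^+ 2 * (4 * dl ^+ 2 / G ^+ 2 * M2) = 2 * dl * (2 * dl * M2).
    by field; rewrite gt_eqF.
  have -> : G ^+ 2 * (2 * dl * T) = 2 * dl * (G ^+ 2 * T) by ring.
  by rewrite ler_pM2l // mulr_gt0.
have i3 : dl * (2 * S * M2 + 1) <= Rb * G ^+ 2.
  have SM : 0 <= 2 * S * M2 by rewrite !mulr_ge0 // ltW.
  have p1 : 0 < 2 * S * M2 + 1 by lra.
  by move: dld; rewrite /dd ler_pdivlMr.
have i4 : G ^+ 2 * (S * T) <= S * (2 * dl * M2).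
  by rewrite mulrCA ler_pM2l.
have i5 : G ^+ 2 * Rb < G ^+ 2 * (S * T).
  by rewrite ltr_pM2l ?exprn_gt0 //; apply: lt_le_trans hsig hsum.
have : S * (2 * dl * M2) = 2 * S * M2 * dl by ring.
have : dl * (2 * S * M2 + 1) = 2 * S * M2 * dl + dl by ring.
lra.
Qed.
Lemma core_false : False.
Proof.
case: (pselect (exists K, forall k, (K <= k)%N -> ~ tr4 k)) => h.
  exact: caseE.
apply: caseC => K; apply: contrapT => hn; apply: h; exists K => k hk h4.
by apply: hn; exists k.
Qed.
End Core.

Lemma run_inf y m : C y -> f y < m -> (forall k, m <= f (x k)) -> False.
Proof. by move=> Cy fym hm; apply: (@core_false y m). Qed.

End Run.

Theorem mainTheorem10 (R : realType) (n : nat)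
  (f : 'rV[R]_n -> R) (C : set 'rV[R]_n)
  (gbar thbar lbar mu blo bhi Rb delta0 : R)
  (gamma theta lambda : nat -> R)
  (phi : nat -> 'rV[R]_n -> 'rV[R]_n -> 'rV[R]_n -> R)
  (x xh : nat -> 'rV[R]_n) (frec : nat -> R) (xrec : nat -> 'rV[R]_n)
  (ell kl : nat -> nat) (delta sig beta eps : nat -> R)
  (s : nat -> 'rV[R]_n) :
  convex_function [set: 'rV[R]_n] f -> convex_set C -> closed (C : set 'M[R^o]_(1, n)) -> C !=set0 ->
  0 <= gbar -> 0 <= thbar < 1 / 2 -> 0 <= lbar < 1 / 2 ->
  (forall k, 0 <= gamma k < gbar) ->
  (forall k, 0 <= theta k < thbar) ->
  (forall k, 0 <= lambda k < lbar) ->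
  0 <= mu ->
  0 < blo -> blo <= bhi ->
  bhi < 2 / (2 * mu + (1 + 2 * gbar) / (1 - 2 * lbar)) ->
  SInexPD_run f C Rb delta0 mu blo bhi gamma theta lambda phi
    x xh frec xrec ell kl delta sig beta eps s ->
  ereal_inf [set (f (x k))%:E | k in [set: nat]]
  = ereal_inf [set (f y)%:E | y in C].
Proof.
move=> cf cC _ _ hg hth hl hgk hthk hlk hmu hblo hbb hbhi run.
have [RI Cx] : (forall y m, C y -> f y < m -> (forall k, m <= f (x k)) -> False)
    /\ (forall k, C (x k)).
  move: run; rewrite /SInexPD_run.
  case=> [[H0x Hd0 HR Hdel0 [Hkl0 Hsig0]] [Hrec0 HrecA HrecB] _ H345 H6].
  split; last by case=> [|k] //; case: (H6 k) => _ _ _ _ [_ []].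
  move=> y m Cy fym hm.
  apply: (@run_inf R n f C gbar thbar lbar mu blo bhi Rb delta0 gamma theta lambda phi
    x xh frec xrec ell kl delta sig beta eps s cf cC hg hth hl hgk hthk hlk hmu hblo hbhi
    H0x Hd0 HR Hdel0 Hkl0 Hsig0 Hrec0 HrecA HrecB _ _ _ H6 y m Cy fym hm).
  - by move=> k h; case: (H345 k) => [A _ _]; apply: A.
  - by move=> k h1 h2; case: (H345 k) => [_ B _]; apply: B.
  - by move=> k h1 h2; case: (H345 k) => [_ _ D]; apply: D.
apply/eqP; rewrite eq_le; apply/andP; split.
  apply/ereal_infP => _ [y Cy <-].
  rewrite leNgt; apply/negP => hlt.
  have [m [fym hm]] : exists m, f y < m /\ (m%:E <= ereal_inf [set (f (x k))%:E | k in [set: nat]])%E.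
    move: hlt; case: (ereal_inf _) => [r| |] hlt.
    - by exists r; split => //; rewrite -lte_fin.
    - by exists (f y + 1); split; [rewrite ltrDl|rewrite leey].
    - by [].
  apply: (RI y m Cy fym) => k.
  rewrite -lee_fin; apply: le_trans hm _; apply: ereal_inf_lbound.
  by exists k.
apply/ereal_infP => _ [k _ <-].
by apply: ereal_inf_lbound; exists (x k).
Qed.
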